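(* Let $P$ be the path $u,w,v$ of length 2, let $m\ge 3$, and let $L$ be an $m$-assignment for $P$. For $c\in L(u)$ and $d\in L(v)$ let $N(c,d)$ be the number of proper $L$-colorings of $P$ in which $u$ is colored $c$ and $v$ is colored $d$. Let $a=|L(u)\cap L(v)|$. Then: (i) for each $c\in L(u)$ and $d\in L(v)$, $m-2\le N(c,d)\le m$; (ii) the number of ordered pairs $(c,d)\in L(u)\times L(v)$ with $N(c,d)=m-2$ is at most $\frac{(a+m)^2}{4}-a$.
   Context: An $m$-assignment $L$ assigns to each vertex $x$ a set $L(x)$ of $m$ colors; a proper $L$-coloring is a proper coloring $f$ with $f(x)\in L(x)$ for every vertex $x$. *)

(* Defs.v *)
From mathcomp Require Import all_boot.
Set Implicit Arguments. Unset Strict Implicit. Unset Printing Implicit Defensive.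

Definition pu : 'I_3 := @Ordinal 3 0 isT.
Definition pw : 'I_3 := @Ordinal 3 1 isT.
Definition pv : 'I_3 := @Ordinal 3 2 isT.

Definition P_edge (x y : 'I_3) : bool :=
  [|| (x == pu) && (y == pw), (x == pw) && (y == pu),
      (x == pw) && (y == pv) | (x == pv) && (y == pw)].

Definition is_assignment (C : finType) (m : nat) (L : 'I_3 -> {set C}) : Prop :=
  forall x, #|L x| = m.

Definition proper_Lcol (C : finType) (L : 'I_3 -> {set C}) (f : {ffun 'I_3 -> C}) : bool :=
  [forall x, f x \in L x] && [forall x, forall y, P_edge x y ==> (f x != f y)].

Definition Ncd (C : finType) (L : 'I_3 -> {set C}) (c d : C) : nat :=
  #|[set f : {ffun 'I_3 -> C} | [&& proper_Lcol L f, f pu == c & f pv == d]]|.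

(* Main.v *)
Require Import Defs.
From mathcomp Require Import all_boot.
From mathcomp Require Import zify.

Lemma I3_cases (i : 'I_3) : [\/ i = pu, i = pw | i = pv].
Proof.
case: i => [[|[|[|k]]] Hi].
- by apply: Or31; apply/val_inj.
- by apply: Or32; apply/val_inj.
- by apply: Or33; apply/val_inj.
- by [].
Qed.

Section S.
Variables (C : finType) (L : 'I_3 -> {set C}).

Definition gcol (c d z : C) : {ffun 'I_3 -> C} :=
  [ffun i : 'I_3 => if i == pu then c else if i == pw then z else d].

Lemma Ncd_eq c d : c \in L pu -> d \in L pv -> Ncd L c d = #|L pw :\ c :\ d|.
Proof.
move=> Hc Hd.
have inj : injective (gcol c d).
  by move=> z1 z2 /ffunP /(_ pw); rewrite !ffunE.
rewrite /Ncd -(card_imset _ inj); apply: eq_card => f; rewrite !inE.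

apply/idP/idP.
- case/and3P => /andP [/forallP Hin /forallP Hed] /eqP Hu /eqP Hv.
  apply/imsetP; exists (f pw).
    rewrite !inE Hin andbT.
    have /forallP e1 := Hed pw; have e2 := e1 pv; have e3 := e1 pu.
    rewrite /P_edge /= in e2 e3.
    by rewrite -Hu -Hv e2 e3.
  apply/ffunP => i; rewrite ffunE.
  by case: (I3_cases i) => ->.
- case/imsetP => z; rewrite !inE => /and3P [Hzd Hzc Hz] ->.
  rewrite /proper_Lcol !ffunE /= !eqxx !andbT; apply/andP; split.
    by apply/forallP => i; case: (I3_cases i) => ->; rewrite ffunE.
  apply/forallP => i; apply/forallP => j.
  case: (I3_cases i) => ->; case: (I3_cases j) => ->; rewrite /P_edge /=. all: rewrite ?ffunE /=; try done. all: by rewrite eq_sym.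
Qed.
End S.

Theorem lemma19 (C : finType) (m : nat) (L : 'I_3 -> {set C}) :
  3 <= m -> is_assignment m L ->
  let a := #|L pu :&: L pv| in
  (forall c d, c \in L pu -> d \in L pv -> m - 2 <= Ncd L c d <= m) /\
  4 * #|[set p in setX (L pu) (L pv) | Ncd L p.1 p.2 == m - 2]| + 4 * a
    <= (a + m) ^ 2.
Proof.
move=> Hm HL a.
have Nval c d : c \in L pu -> d \in L pv ->
    Ncd L c d = m - (c \in L pw) - (d \in L pw :\ c).
  move=> Hc Hd; rewrite Ncd_eq // -(HL pw) (cardsD1 c (L pw)) (cardsD1 d (L pw :\ c)).
  lia.
split.
  move=> c d Hc Hd; rewrite Nval //.
  by case: (c \in L pw); case: (d \in _); lia.
set X := L pu :&: L pw; set Y := L pv :&: L pw.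
set D := [set (t, t) | t in X :&: Y].
have ES : [set p in setX (L pu) (L pv) | Ncd L p.1 p.2 == m - 2] = setX X Y :\: D.
  apply/setP => [[c d]]; rewrite !inE /=.
  case Hc: (c \in L pu); case Hd: (d \in L pv) => //=; rewrite ?andbF //.
  rewrite Nval // !inE.
  have -> : ((c, d) \in D) = (c == d) && (c \in X :&: Y).
    apply/imsetP/andP => [[t Ht [-> ->]]|[/eqP <- H]]; first by rewrite eqxx.
    by exists c.
  rewrite !inE Hc (eq_sym d c); case: (eqVneq c d) => [e|ne].
    subst d; rewrite ?Hd ?eqxx /=; case: (c \in L pw); rewrite /=; lia.
  rewrite /=; case: (c \in L pw); case: (d \in L pw); rewrite /=; lia.
have DS : D \subset setX X Y.
  by apply/subsetP => p /imsetP [t]; rewrite !inE => /andP [/andP [H1 H2] /andP [H3 H4]] ->; rewrite /= H1 H2 H3 ?H4.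
have cD : #|D| = #|X :&: Y|.
  by apply: card_imset => s t [].
have cS : #|setX X Y :\: D| + #|X :&: Y| = #|X| * #|Y|.
  by rewrite cardsD (setIidPr DS) cD -cardsX subnK // -cD subset_leq_card.
have cU : #|X :|: Y| <= m.
  by rewrite -(HL pw); apply: subset_leq_card; apply/subsetP => t; rewrite !inE => /orP [/andP[_ ->]|/andP[_ ->]].
have cU2 := cardsU X Y.
have za : #|X :&: Y| <= a.
  by apply: subset_leq_card; apply/subsetP => t; rewrite !inE => /andP [/andP[-> _] /andP[-> _]].
have zX : #|X :&: Y| <= #|X| by apply: subset_leq_card; apply: subsetIl.
have zY : #|X :&: Y| <= #|Y| by apply: subset_leq_card; apply: subsetIr.
rewrite ES.
move: cS cU cU2 za zX zY Hm.
set s := #|_ :\: _|; set x := #|X|; set y := #|Y|; set z := #|X :&: Y|; set u := #|X :|: Y|.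
move=> cS cU cU2 za zX zY Hm.
have Hxy : x + y <= m + z by lia.
have h1 : 4 * (x * y) <= (x + y) ^ 2.
  case: (leqP x y) => h.
  - rewrite -(subnK h); set k := y - x; nia.
  - rewrite -(subnK (ltnW h)); set k := x - y; nia.
have h2 : (x + y) ^ 2 <= (m + z) ^ 2 by rewrite leq_exp2r.
have h3 : (m + z) ^ 2 + 4 * (a - z) <= (a + m) ^ 2.
  move: za; rewrite -/z => za.
  rewrite -(subnK za); set k := a - z; rewrite addnK. nia.
lia.
Qed.
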